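(* Let $n\ge 2$, let $A\in\mathbb{R}^{n\times n}$ be symmetric with zero diagonal, let $\lambda>0$, and let $p_1,\dots,p_n\in[0,1)$ with $p_{\max}=\max_ip_i$. Then for every fixed $w\in\mathbb{R}^{2n-1}$, $$\mathbb{E}_{X\sim\mathcal{D}_{\mathsf{miss}}}[G_{\mathsf{miss}}(w;X)]=\nabla\widetilde S(w),$$ and for all $X\in\{-1,0,1\}^n$ and all $w\in\Delta(\lambda,2n-1)$, $$\|G_{\mathsf{miss}}(w;X)\|_\infty\le\frac{1}{(1-p_{\max})^2}\exp\left(\frac{\lambda}{1-p_{\max}}\right).$$
   Context: Ising model $\mathcal{D}=\mathcal{D}(A,0)$ on $\{-1,1\}^n$: $\Pr[Z=z]\propto\exp\big(\sum_{i<j}A_{ij}z_iz_j\big)$. Missing-data distribution $\mathcal{D}_{\mathsf{miss}}$: draw $Z\sim\mathcal{D}$ and independent $C_1,\dots,C_n$ with $C_i\in\{0,1\}$, $\Pr[C_i=1]=1-p_i$; output $X$ with $X_i=C_iZ_i$ (a missing entry is recorded as $0$). $\Delta(W,k)=\{x\in\mathbb{R}^k:x\ge0,\sum_ix_i=W\}$. Simplex ISO: $\widetilde S(w)=\mathbb{E}_{Z\sim\mathcal{D}}\big[\exp\big(-\sum_{j=1}^{n-1}(w_j-w_{n-1+j})Z_nZ_j\big)\big]$ for $w\in\mathbb{R}^{2n-1}$. Estimator: for $w\in\mathbb{R}^{2n-1}$, $X\in\{-1,0,1\}^n$, put $v_j=w_j-w_{n-1+j}$ and for $i\in[n-1]$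 $$g^i_{\mathsf{miss}}(w;X)=-\frac{X_n}{1-p_n}\cdot\frac{\exp(-v_iX_nX_i)X_i}{1-p_i}\cdot\prod_{j\in[n-1],\,j\ne i}\frac{\exp(-v_jX_nX_j)-p_j}{1-p_j},$$ and $G_{\mathsf{miss}}(w;X)=\sum_{i=1}^{n-1}g^i_{\mathsf{miss}}(w;X)(e^i-e^{n-1+i})\in\mathbb{R}^{2n-1}$, where $e^i$ is the $i$-th standard basis vector of $\mathbb{R}^{2n-1}$. *)

(* Defs.v *)
From Stdlib Require Import Reals List.
Open Scope R_scope.

Fixpoint rsum (m : nat) (f : nat -> R) : R :=
  match m with O => 0 | S k => rsum k f + f k end.
Fixpoint rprod (m : nat) (f : nat -> R) : R :=
  match m with O => 1 | S k => rprod k f * f k end.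
(* max over indices 0..m-1 (starting from 0; used only with p_i >= 0, m >= 1) *)
Fixpoint rmaxn (m : nat) (f : nat -> R) : R :=
  match m with O => 0 | S k => Rmax (rmaxn k f) (f k) end.

Definition lsum {T : Type} (l : list T) (f : T -> R) : R :=
  fold_right (fun x acc => f x + acc) 0 l.

(* All boolean vectors b : {0..m-1} -> bool (values outside are false). *)
Fixpoint bcube (m : nat) : list (nat -> bool) :=
  match m with
  | O => (fun _ => false) :: nil
  | S k => flat_map (fun b =>
             (fun i => if Nat.eqb i k then true else b i) ::
             (fun i => if Nat.eqb i k then false else b i) :: nil) (bcube k)
  end.

Definition spin (b : nat -> bool) (i : nat) : R := if b i then 1 else -1.

(* Ising model D(A,0) on {-1,1}^n (coordinates 0..n-1). *)
Definition ising_energy (n : nat) (A : nat -> nat -> R) (z : nat -> R) : R :=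
  rsum n (fun j => rsum j (fun i => A i j * z i * z j)).
Definition ising_weight (n : nat) (A : nat -> nat -> R) (z : nat -> R) : R :=
  exp (ising_energy n A z).
Definition ising_Z (n : nat) (A : nat -> nat -> R) : R :=
  lsum (bcube n) (fun b => ising_weight n A (spin b)).
Definition E_ising (n : nat) (A : nat -> nat -> R) (f : (nat -> R) -> R) : R :=
  lsum (bcube n) (fun b => ising_weight n A (spin b) / ising_Z n A * f (spin b)).

(* Missing-data distribution: C_i = 1 (observed) w.p. 1 - p_i, independent;
   X_i = C_i Z_i.  E_{X ~ D_miss}[f X]. *)
Definition mask_prob (n : nat) (p : nat -> R) (c : nat -> bool) : R :=
  rprod n (fun i => if c i then 1 - p i else p i).
Definition E_miss (n : nat) (A : nat -> nat -> R) (p : nat -> R)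
    (f : (nat -> R) -> R) : R :=
  E_ising n A (fun z =>
    lsum (bcube n) (fun c =>
      mask_prob n p c * f (fun i => if c i then z i else 0))).

(* 0-based indexing: node n-1 plays the role of node n of the paper;
   j in 0..n-2 corresponds to the paper's j+1; w : R^{2n-1} has coordinates
   0..2n-2, and v_j = w_j - w_{n-1+j} (0-based). *)
Definition vcoef (n : nat) (w : nat -> R) (j : nat) : R := w j - w (n - 1 + j)%nat.

Definition Stilde (n : nat) (A : nat -> nat -> R) (w : nat -> R) : R :=
  E_ising n A (fun z =>
    exp (- rsum (n - 1) (fun j => vcoef n w j * z (n - 1)%nat * z j))).

Definition g_miss (n : nat) (p : nat -> R) (w : nat -> R) (X : nat -> R) (i : nat) : R :=
  let v := vcoef n w in
  let last := (n - 1)%nat in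
  - (X last / (1 - p last))
  * (exp (- v i * X last * X i) * X i / (1 - p i))
  * rprod (n - 1) (fun j =>
      if Nat.eqb j i then 1
      else (exp (- v j * X last * X j) - p j) / (1 - p j)).

(* k-th coordinate (0..2n-2) of G_miss(w;X) = sum_i g^i (e^i - e^{n-1+i}) *)
Definition G_miss (n : nat) (p : nat -> R) (w : nat -> R) (X : nat -> R) (k : nat) : R :=
  if Nat.ltb k (n - 1) then g_miss n p w X k
  else if Nat.ltb k (2 * n - 2) then - g_miss n p w X (k - (n - 1))
  else 0.

Definition upd (w : nat -> R) (k : nat) (t : R) : nat -> R :=
  fun i => if Nat.eqb i k then t else w i.

Definition in_simplex (W : R) (m : nat) (w : nat -> R) : Prop :=
  (forall k, (k < m)%nat -> 0 <= w k) /\ rsum m w = W.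

(* Main.v *)
Require Import Defs.
From Stdlib Require Import Reals List Lra Lia Psatz FunctionalExtensionality.
Open Scope R_scope.

Lemma exp_mono x y : x <= y -> exp x <= exp y.
Proof. intros H; destruct (Req_dec x y) as [->|]; [lra|]. left; apply exp_increasing; lra. Qed.

Lemma dpl_ext f g x l l' : (forall t, f t = g t) -> derivable_pt_lim f x l -> l = l' ->
  derivable_pt_lim g x l'.
Proof.
intros H D E; subst l'. unfold derivable_pt_lim in *. intros eps He.
destruct (D eps He) as [d Hd]. exists d. intros h Hh Hd'. rewrite <- !H. apply Hd; auto.
Qed.

Lemma rsum_ext m f g : (forall j, (j < m)%nat -> f j = g j) -> rsum m f = rsum m g.
Proof. induction m; simpl; intros H; auto. rewrite IHm by (intros; apply H; lia). rewrite H by lia. auto. Qed.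

Lemma rprod_ext m f g : (forall j, (j < m)%nat -> f j = g j) -> rprod m f = rprod m g.
Proof. induction m; simpl; intros H; auto. rewrite IHm by (intros; apply H; lia). rewrite H by lia. auto. Qed.

Lemma rsum_delta m k c : rsum m (fun j => if Nat.eqb j k then c j else 0) =
  if Nat.ltb k m then c k else 0.
Proof.
induction m; simpl. destruct (Nat.ltb_spec k 0); [lia|auto].
rewrite IHm. destruct (Nat.ltb_spec k m), (Nat.ltb_spec k (S m)), (Nat.eqb_spec m k); subst; try lia; lra.
Qed.

Lemma rsum_zero m f : (forall j, (j < m)%nat -> f j = 0) -> rsum m f = 0.
Proof. intros H. rewrite (rsum_ext m f (fun _ => 0)) by auto. clear H. induction m; simpl; auto; lra. Qed.

Lemma rsum_div m f q : rsum m (fun j => f j / q) = rsum m f / q.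
Proof. induction m; simpl. unfold Rdiv; ring. rewrite IHm. unfold Rdiv; ring. Qed.

Lemma rsum_shift a b f : rsum (a + b) f = rsum a f + rsum b (fun j => f (a + j)%nat).
Proof. induction b; simpl. rewrite Nat.add_0_r; ring. rewrite Nat.add_succ_r; simpl. rewrite IHb; ring. Qed.

Lemma rprod_pick m i a f : (i < m)%nat ->
  rprod m (fun j => if Nat.eqb j i then a else f j) = a * rprod m (fun j => if Nat.eqb j i then 1 else f j).
Proof.
induction m; intros Hi; [lia|]. simpl.
destruct (Nat.eqb_spec m i).
- subst. rewrite (rprod_ext i (fun j => if Nat.eqb j i then a else f j) f),
   (rprod_ext i (fun j => if Nat.eqb j i then 1 else f j) f); try ring;
   intros j Hj; destruct (Nat.eqb_spec j i); auto; lia.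
- rewrite IHm by lia. ring.
Qed.

Lemma exp_rsum_opp m f : exp (- rsum m f) = rprod m (fun j => exp (- f j)).
Proof. induction m; simpl. rewrite Ropp_0; apply exp_0. rewrite Ropp_plus_distr, exp_plus, IHm; auto. Qed.

Lemma exp_rsum m f : exp (rsum m f) = rprod m (fun j => exp (f j)).
Proof. induction m; simpl. apply exp_0. rewrite exp_plus, IHm; auto. Qed.

Lemma rprod_mult m f g : rprod m (fun j => f j * g j) = rprod m f * rprod m g.
Proof. induction m; simpl. ring. rewrite IHm; ring. Qed.

Lemma rprod_last n f : (1 <= n)%nat -> rprod n f = rprod (n-1) f * f (n-1)%nat.
Proof. destruct n; intros; [lia|]. simpl. rewrite Nat.sub_0_r. auto. Qed.

Lemma rprod_abs_le m f g : (forall j, (j < m)%nat -> Rabs (f j) <= g j) -> Rabs (rprod m f) <= rprod m g.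
Proof.
induction m; simpl; intros H. rewrite Rabs_R1; lra.
rewrite Rabs_mult. apply Rmult_le_compat; try apply Rabs_pos; auto.
Qed.

Lemma lsum_app {T} (l1 l2 : list T) f : lsum (l1 ++ l2) f = lsum l1 f + lsum l2 f.
Proof. induction l1; simpl; [ring|]. unfold lsum in *; simpl. rewrite IHl1; ring. Qed.

Lemma lsum_flat_map {T U} (g : T -> list U) l f : lsum (flat_map g l) f = lsum l (fun b => lsum (g b) f).
Proof. induction l; simpl; auto. rewrite lsum_app, IHl. reflexivity. Qed.

Lemma lsum_ext {T} l (f g : T -> R) : (forall x, f x = g x) -> lsum l f = lsum l g.
Proof. intros H; induction l; simpl; auto. unfold lsum in *; simpl; rewrite IHl, H; auto. Qed.

Lemma lsum_mulr {T} l (f : T -> R) a : lsum l (fun x => f x * a) = lsum l f * a.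
Proof. induction l; unfold lsum in *; simpl; [ring|]. rewrite IHl; ring. Qed.

Lemma lsum_opp {T} l (f : T -> R) : lsum l (fun x => - f x) = - lsum l f.
Proof. induction l; unfold lsum in *; simpl; [ring|]. rewrite IHl; ring. Qed.

Lemma bcube_prod m (F : nat -> bool -> R) :
  lsum (bcube m) (fun c => rprod m (fun j => F j (c j))) = rprod m (fun j => F j true + F j false).
Proof.
induction m. unfold lsum; simpl; ring.
change (bcube (S m)) with (flat_map (fun b =>
             (fun i => if Nat.eqb i m then true else b i) ::
             (fun i => if Nat.eqb i m then false else b i) :: nil) (bcube m)).
rewrite lsum_flat_map. simpl rprod at 2. rewrite <- IHm, <- lsum_mulr.
apply lsum_ext; intros b. unfold lsum; simpl. rewrite Nat.eqb_refl.
rewrite (rprod_ext m (fun j => F j (if Nat.eqb j m then true else b j)) (fun j => F j (b j))),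
  (rprod_ext m (fun j => F j (if Nat.eqb j m then false else b j)) (fun j => F j (b j))).
ring. all: intros j Hj; destruct (Nat.eqb_spec j m); auto; lia.
Qed.

Definition wt (p : nat -> R) j (b : bool) : R := if b then 1 - p j else p j.
Definition psi n p w (z : nat -> R) i j (b : bool) : R :=
  let L := (n - 1)%nat in
  let xj := if b then z j else 0 in
  if Nat.eqb j L then - ((if b then z L else 0) / (1 - p L))
  else if Nat.eqb j i then exp (- vcoef n w i * z L * xj) * xj / (1 - p i)
  else (exp (- vcoef n w j * z L * xj) - p j) / (1 - p j).

Lemma claimA n p w z i c : (1 <= n)%nat -> (i < n - 1)%nat ->
  mask_prob n p c * g_miss n p w (fun l => if c l then z l else 0) i
  = rprod n (fun j => wt p j (c j) * psi n p w z i j (c j)).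
Proof.
intros Hn Hi. rewrite rprod_mult. unfold mask_prob. f_equal.
rewrite rprod_last by auto. unfold psi at 2. rewrite Nat.eqb_refl. cbv zeta.
rewrite (rprod_ext (n-1) (fun j => psi n p w z i j (c j))
   (fun j => if Nat.eqb j i then
       exp (- vcoef n w i * z (n-1)%nat * (if c i then z i else 0)) * (if c i then z i else 0) / (1 - p i)
     else (exp (- vcoef n w j * z (n-1)%nat * (if c j then z j else 0)) - p j) / (1 - p j))).
2:{ intros j Hj. unfold psi. destruct (Nat.eqb_spec j (n-1)); [lia|]. cbv zeta.
    destruct (Nat.eqb_spec j i); subst; auto. }
rewrite rprod_pick by auto.
unfold g_miss. cbv zeta.
destruct (c (n-1)%nat) eqn:Hc.
- ring.
- unfold Rdiv. ring.
Qed.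

Lemma claimB n p w z i : (1 <= n)%nat -> (i < n - 1)%nat ->
  (forall j, (j < n)%nat -> p j < 1) ->
  lsum (bcube n) (fun c => mask_prob n p c * g_miss n p w (fun l => if c l then z l else 0) i)
  = - z (n-1)%nat * z i * exp (- rsum (n-1) (fun j => vcoef n w j * z (n-1)%nat * z j)).
Proof.
intros Hn Hi Hp.
rewrite (lsum_ext _ _ (fun c => rprod n (fun j => (fun j b => wt p j b * psi n p w z i j b) j (c j))))
  by (intros; apply claimA; auto).
rewrite (bcube_prod n (fun j b => wt p j b * psi n p w z i j b)), rprod_last by auto.
unfold wt. unfold psi at 3 4. rewrite !Nat.eqb_refl. cbv zeta.
rewrite (rprod_ext (n-1) _ (fun j => if Nat.eqb j i then exp (- vcoef n w i * z (n-1)%nat * z i) * z i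
     else exp (- (vcoef n w j * z (n-1)%nat * z j)))).
2:{ intros j Hj. unfold psi. destruct (Nat.eqb_spec j (n-1)); [lia|]. cbv zeta.
    assert (p j < 1) by (apply Hp; lia).
    destruct (Nat.eqb_spec j i); subst.
    - field; lra.
    - rewrite Rmult_0_r, exp_0. replace (- (vcoef n w j * z (n - 1)%nat * z j)) with
        (- vcoef n w j * z (n - 1)%nat * z j) by ring. field; lra. }
rewrite rprod_pick by auto. rewrite exp_rsum_opp.
rewrite (rprod_ext (n-1) (fun j => exp (- (vcoef n w j * z (n - 1)%nat * z j)))
   (fun j => if Nat.eqb j i then exp (- vcoef n w i * z (n - 1)%nat * z i) else exp (- (vcoef n w j * z (n - 1)%nat * z j)))).
2:{ intros j Hj. destruct (Nat.eqb_spec j i); subst; auto. f_equal; ring. }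
rewrite (rprod_pick (n-1) i (exp (- vcoef n w i * z (n - 1)%nat * z i))) by auto.
assert (p (n-1)%nat < 1) by (apply Hp; lia).
field; lra.
Qed.

Lemma dpl_lsum {T} (l : list T) F D x :
  (forall b, derivable_pt_lim (F b) x (D b)) ->
  derivable_pt_lim (fun t => lsum l (fun b => F b t)) x (lsum l D).
Proof.
intros H. induction l.
- eapply dpl_ext; [| apply (derivable_pt_lim_const 0) |]; reflexivity.
- eapply dpl_ext; [| apply (derivable_pt_lim_plus _ _ _ _ _ (H a) IHl) |]; reflexivity.
Qed.

Lemma dpl_rsum m F d x :
  (forall j, derivable_pt_lim (F j) x (d j)) ->
  derivable_pt_lim (fun t => rsum m (fun j => F j t)) x (rsum m d).
Proof.
intros H. induction m.
- eapply dpl_ext; [| apply (derivable_pt_lim_const 0) |]; reflexivity.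
- eapply dpl_ext; [| apply (derivable_pt_lim_plus _ _ _ _ _ IHm (H m)) |]; reflexivity.
Qed.

Lemma dpl_mulc f x l c : derivable_pt_lim f x l -> derivable_pt_lim (fun t => f t * c) x (l * c).
Proof.
intros H. eapply dpl_ext; [| apply (derivable_pt_lim_mult _ _ _ _ _ H (derivable_pt_lim_const c x)) |].
- intros; reflexivity.
- unfold fct_cte; ring.
Qed.

Lemma dpl_cmul f x l c : derivable_pt_lim f x l -> derivable_pt_lim (fun t => c * f t) x (c * l).
Proof.
intros H. eapply dpl_ext; [| apply (dpl_mulc _ _ _ c H) |]; intros; simpl; ring.
Qed.

Lemma dpl_upd w k m x : derivable_pt_lim (fun t => upd w k t m) x (if Nat.eqb m k then 1 else 0).
Proof.
unfold upd. destruct (Nat.eqb m k).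
- eapply dpl_ext; [| apply derivable_pt_lim_id |]; reflexivity.
- eapply dpl_ext; [| apply (derivable_pt_lim_const (w m)) |]; reflexivity.
Qed.

Lemma dpl_expS n w k z x :
  derivable_pt_lim (fun t => exp (- rsum (n-1) (fun j => vcoef n (upd w k t) j * z (n-1)%nat * z j))) x
   (exp (- rsum (n-1) (fun j => vcoef n (upd w k x) j * z (n-1)%nat * z j)) *
    - rsum (n-1) (fun j => ((if Nat.eqb j k then 1 else 0) - (if Nat.eqb (n - 1 + j) k then 1 else 0)) * z (n-1)%nat * z j)).
Proof.
set (S := fun t => rsum (n-1) (fun j => vcoef n (upd w k t) j * z (n-1)%nat * z j)).
assert (HS : derivable_pt_lim S x (rsum (n-1) (fun j => ((if Nat.eqb j k then 1 else 0) - (if Nat.eqb (n - 1 + j) k then 1 else 0)) * z (n-1)%nat * z j))).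
{ unfold S. apply (dpl_rsum (n-1) (fun j t => vcoef n (upd w k t) j * z (n-1)%nat * z j)).
  intros j. apply (dpl_mulc (fun t => vcoef n (upd w k t) j * z (n-1)%nat)).
  apply (dpl_mulc (fun t => vcoef n (upd w k t) j)). unfold vcoef.
  apply (derivable_pt_lim_minus (fun t => upd w k t j) (fun t => upd w k t (n - 1 + j)%nat));
  apply dpl_upd. }
eapply dpl_ext; [| apply (derivable_pt_lim_comp _ exp _ _ _ (derivable_pt_lim_opp _ _ _ HS) (derivable_pt_lim_exp _)) |].
- intros; reflexivity.
- reflexivity.
Qed.

Lemma upd_same w k : upd w k (w k) = w.
Proof. apply functional_extensionality; intros i; unfold upd; destruct (Nat.eqb_spec i k); subst; auto. Qed.

Lemma deriv_part n A p w k : (2 <= n)%nat -> (forall i, (i < n)%nat -> 0 <= p i < 1) ->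
  (k < 2 * n - 1)%nat ->
  derivable_pt_lim (fun t => Stilde n A (upd w k t)) (w k)
       (E_miss n A p (fun X => G_miss n p w X k)).
Proof.
intros Hn Hp Hk.
assert (Hp' : forall j, (j < n)%nat -> p j < 1) by (intros j Hj; specialize (Hp j Hj); lra).
unfold Stilde, E_ising, E_miss.
eapply dpl_ext; [intros t; reflexivity | apply dpl_lsum; intros b; apply dpl_cmul; apply dpl_expS |].
unfold E_ising. apply lsum_ext; intros b. f_equal. rewrite upd_same.
set (z := spin b). clearbody z.
set (D := rsum _ (fun j => (_ - _) * _ * _)).
unfold G_miss.
destruct (Nat.ltb_spec k (n-1)).
- rewrite claimB by (auto; lia).
  assert (D = z (n-1)%nat * z k).
  { unfold D. rewrite (rsum_ext _ _ (fun j => if Nat.eqb j k then z (n-1)%nat * z j else 0)).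
    rewrite rsum_delta. destruct (Nat.ltb_spec k (n-1)); [auto|lia].
    intros j Hj. destruct (Nat.eqb_spec j k), (Nat.eqb_spec (n - 1 + j) k); try lia; ring. }
  rewrite H0; ring.
- destruct (Nat.ltb_spec k (2 * n - 2)).
  + rewrite lsum_ext with (g := fun c => - (mask_prob n p c * g_miss n p w (fun i => if c i then z i else 0) (k - (n - 1))))
     by (intros; ring).
    rewrite lsum_opp, claimB by (auto; lia).
    assert (D = - (z (n-1)%nat * z (k - (n-1))%nat)).
    { unfold D. rewrite (rsum_ext _ _ (fun j => if Nat.eqb j (k - (n-1)) then - (z (n-1)%nat * z j) else 0)).
      rewrite rsum_delta. destruct (Nat.ltb_spec (k - (n-1)) (n-1)); [auto|lia].
      intros j Hj. destruct (Nat.eqb_spec j k), (Nat.eqb_spec (n - 1 + j) k), (Nat.eqb_spec j (k - (n-1))); try lia; ring. }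
    rewrite H1; ring.
  + rewrite lsum_ext with (g := fun c => 0 * 0) by (intros; ring).
    rewrite lsum_mulr.
    assert (D = 0).
    { unfold D. apply rsum_zero. intros j Hj.
      destruct (Nat.eqb_spec j k), (Nat.eqb_spec (n - 1 + j) k); try lia; ring. }
    rewrite H1; ring.
Qed.

Lemma rmaxn_ge m f i : (i < m)%nat -> f i <= rmaxn m f.
Proof.
induction m; intros Hi; [lia|]. simpl.
destruct (Nat.eq_dec i m) as [->|]. apply Rmax_r.
eapply Rle_trans; [apply IHm; lia | apply Rmax_l].
Qed.

Lemma rmaxn_bnd m f : (forall i, (i < m)%nat -> 0 <= f i < 1) -> 0 <= rmaxn m f < 1.
Proof.
induction m; simpl; intros H; [lra|].
assert (0 <= rmaxn m f < 1) by (apply IHm; intros; apply H; lia).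
assert (0 <= f m < 1) by (apply H; lia).
unfold Rmax; destruct (Rle_dec _ _); lra.
Qed.

Lemma fac_bound t a p : Rabs t <= a -> 0 <= p < 1 ->
  Rabs ((exp t - p) / (1 - p)) <= exp (a / (1 - p)).
Proof.
intros Ht Hp. set (r := 1 - p). assert (Hr : 0 < r <= 1) by (unfold r; lra).
set (u := a / r). assert (Hau : a = r * u) by (unfold u; field; lra).
assert (Ha : 0 <= a) by (pose proof (Rabs_pos t); lra).
assert (Hu : 0 <= u) by (unfold u; apply Rmult_le_pos; [lra|left; apply Rinv_0_lt_compat; lra]).
assert (E1 : exp t <= exp a) by (apply exp_mono; pose proof (Rle_abs t); lra).
assert (E2 : exp (- a) <= exp t) by (apply exp_mono; pose proof (Rle_abs (-t)); rewrite Rabs_Ropp in *; lra).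
assert (T1 := exp_ineq1_le (u - a)). assert (T2 := exp_ineq1_le (- a)).
assert (T3 := exp_ineq1_le u).
assert (Ea : exp u = exp a * exp (u - a)) by (rewrite <- exp_plus; f_equal; ring).
assert (Eb : 1 = exp a * exp (- a)) by (rewrite <- exp_plus, <- exp_0; f_equal; ring).
assert (Pa := exp_pos a).
assert (Key : Rabs (exp t - p) <= r * exp u).
{ assert (K1 : exp a - p <= r * exp u).
  { assert (exp a * (1 + (u - a)) <= exp u) by (rewrite Ea; apply Rmult_le_compat_l; lra).
    assert (exp a * (1 + - a) <= 1) by (rewrite Eb at 2; apply Rmult_le_compat_l; lra).
    unfold r in *. nra. }
  unfold Rabs; destruct (Rcase_abs _); nra. }
unfold Rdiv. rewrite Rabs_mult, Rabs_inv, (Rabs_right r) by lra.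
fold u. apply (Rmult_le_reg_r r); [lra|].
rewrite Rmult_assoc, Rinv_l by lra. lra.
Qed.

Lemma absX (x : R) : x = -1 \/ x = 0 \/ x = 1 -> Rabs x <= 1.
Proof. intros [H|[H|H]]; rewrite H; unfold Rabs; destruct Rcase_abs; lra. Qed.

Lemma mul3 x a b: 0<=x -> 0<=a<=1 -> 0<=b<=1 -> x*a*b <= x.
Proof. intros. assert (x*a <= x*1) by (apply Rmult_le_compat_l; lra).
assert (x*a*b <= x*a*1) by (apply Rmult_le_compat_l; [apply Rmult_le_pos|]; lra). lra. Qed.
Lemma mul2 a b c : 0 <= a <= 1 -> 0 <= b <= c -> a * b <= c.
Proof. intros. assert (a*b <= 1*b) by (apply Rmult_le_compat_r; lra). lra. Qed.
Lemma mul4 a q : 0 <= a -> 1 <= q -> a <= a * q.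
Proof. intros. assert (a*1 <= a*q) by (apply Rmult_le_compat_l; lra). lra. Qed.

Lemma g_bound n p w X i q : (1 <= n)%nat -> (i < n - 1)%nat ->
  (forall j, (j < n)%nat -> 0 <= p j < 1) -> 0 < q <= 1 ->
  (forall j, (j < n)%nat -> q <= 1 - p j) ->
  (forall j, (j < n)%nat -> X j = -1 \/ X j = 0 \/ X j = 1) ->
  Rabs (g_miss n p w X i) <= / q ^ 2 * exp (rsum (n-1) (fun j => Rabs (vcoef n w j)) / q).
Proof.
intros Hn Hi Hp Hq Hpq HX.
assert (HXa : forall j, (j < n)%nat -> 0 <= Rabs (X j) <= 1) by (intros; split; [apply Rabs_pos|apply absX; auto]).
assert (HL := HXa (n-1)%nat ltac:(lia)).
unfold g_miss. cbv zeta.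
set (L := (n-1)%nat) in *. assert (HLn : (L < n)%nat) by (unfold L; lia).
rewrite <- rsum_div, exp_rsum.
rewrite (rprod_ext L (fun j => exp (Rabs (vcoef n w j) / q))
   (fun j => if Nat.eqb j i then exp (Rabs (vcoef n w i) / q) else exp (Rabs (vcoef n w j) / q)))
  by (intros j _; destruct (Nat.eqb_spec j i); subst; auto).
rewrite (rprod_pick L i (exp (Rabs (vcoef n w i) / q))) by auto.
rewrite !Rabs_mult.
set (P := rprod L (fun j => if Nat.eqb j i then 1 else exp (Rabs (vcoef n w j) / q))).
assert (HP0 : 0 <= P).
{ unfold P. clear. induction L; simpl; [lra|]. apply Rmult_le_pos; auto.
  destruct (Nat.eqb L i); [lra | left; apply exp_pos]. }
assert (B3 : Rabs (rprod L (fun j => if Nat.eqb j i then 1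
      else (exp (- vcoef n w j * X L * X j) - p j) / (1 - p j))) <= P).
{ apply rprod_abs_le. intros j Hj. destruct (Nat.eqb j i). rewrite Rabs_R1; lra.
  assert (Hpj := Hp j ltac:(lia)). assert (Hj' := Hpq j ltac:(lia)).
  eapply Rle_trans. apply (fac_bound _ (Rabs (vcoef n w j))); auto.
  - rewrite !Rabs_mult, Rabs_Ropp. assert (HXj := HXa j ltac:(lia)).
    pose proof (Rabs_pos (vcoef n w j)). apply mul3; auto.
  - apply exp_mono. unfold Rdiv. apply Rmult_le_compat_l. apply Rabs_pos.
    apply Rinv_le_contravar; lra. }
assert (Hq1 : 1 - p L >= q) by (apply Rle_ge, Hpq; lia).
assert (Hqi : 1 - p i >= q) by (apply Rle_ge, Hpq; lia).
assert (B1 : Rabs (- (X L / (1 - p L))) <= / q).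
{ rewrite Rabs_Ropp. unfold Rdiv. rewrite Rabs_mult, Rabs_inv, (Rabs_right (1 - p L)) by lra.
  assert (/ (1 - p L) <= / q) by (apply Rinv_le_contravar; lra).
  assert (0 <= / (1 - p L)) by (left; apply Rinv_0_lt_compat; lra). apply mul2; auto. }
set (a := Rabs (vcoef n w i)).
assert (B2 : Rabs (exp (- vcoef n w i * X L * X i) * X i / (1 - p i)) <= exp (a / q) * / q).
{ unfold Rdiv. rewrite !Rabs_mult, Rabs_inv, (Rabs_right (1 - p i)) by lra.
  rewrite (Rabs_right (exp _)) by (left; apply exp_pos).
  assert (/ (1 - p i) <= / q) by (apply Rinv_le_contravar; lra).
  assert (0 <= / (1 - p i)) by (left; apply Rinv_0_lt_compat; lra).
  assert (HXi := HXa i ltac:(lia)).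
  assert (exp (- vcoef n w i * X L * X i) <= exp (a * / q)).
  { apply exp_mono. assert (a <= a * / q).
    { assert (1 <= / q) by (rewrite <- Rinv_1; apply Rinv_le_contravar; lra).
      assert (0 <= a) by apply Rabs_pos. apply mul4; auto. }
    eapply Rle_trans; [apply Rle_abs|]. rewrite !Rabs_mult, Rabs_Ropp. fold a.
    assert (0 <= a) by apply Rabs_pos. eapply Rle_trans; [apply mul3; auto|]; auto. }
  pose proof (exp_pos (- vcoef n w i * X L * X i)).
  apply Rmult_le_compat; try lra. apply Rmult_le_pos; [lra|]. apply Rabs_pos. rewrite Rmult_comm; apply mul2; [auto|split; lra]. }

assert (0 <= / q) by (left; apply Rinv_0_lt_compat; lra).
pose proof (exp_pos (a / q)).
replace (/ q ^ 2 * (exp (a / q) * P)) with (/ q * (exp (a / q) * / q) * P) by (field; lra).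
apply Rmult_le_compat; try apply Rmult_le_pos; try apply Rabs_pos; auto.
apply Rmult_le_compat; try apply Rabs_pos; auto.
Qed.

Lemma rsum_le m f g : (forall j, (j < m)%nat -> f j <= g j) -> rsum m f <= rsum m g.
Proof. induction m; simpl; intros H; [lra|]. assert (f m <= g m) by (apply H; lia).
assert (rsum m f <= rsum m g) by (apply IHm; intros; apply H; lia). lra. Qed.

Lemma rsum_plus m f g : rsum m (fun j => f j + g j) = rsum m f + rsum m g.
Proof. induction m; simpl; [ring|]. rewrite IHm; ring. Qed.

Lemma vsum_bound n w lam : (1 <= n)%nat -> in_simplex lam (2 * n - 1) w ->
  rsum (n-1) (fun j => Rabs (vcoef n w j)) <= lam.
Proof.
intros Hn [Hw Hs].
assert (E : (2 * n - 1 = (n - 1) + n)%nat) by lia.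
rewrite E, rsum_shift in Hs.
replace n with (S (n-1)) in Hs at 2 by lia. simpl in Hs.
assert (0 <= w (n - 1 + (n - 1))%nat) by (apply Hw; lia).
eapply Rle_trans. apply (rsum_le _ _ (fun j => w j + w (n - 1 + j)%nat)).
- intros j Hj. unfold vcoef. assert (0 <= w j) by (apply Hw; lia).
  assert (0 <= w (n - 1 + j)%nat) by (apply Hw; lia).
  unfold Rabs; destruct Rcase_abs; lra.
- rewrite rsum_plus. lra.
Qed.
Theorem mainTheorem5 (n : nat) (A : nat -> nat -> R) (lam : R) (p : nat -> R) :
  (2 <= n)%nat ->
  (forall i j, (i < n)%nat -> (j < n)%nat -> A i j = A j i) ->
  (forall i, (i < n)%nat -> A i i = 0) ->
  0 < lam ->
  (forall i, (i < n)%nat -> 0 <= p i < 1) ->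
  (forall (w : nat -> R) (k : nat), (k < 2 * n - 1)%nat ->
     derivable_pt_lim (fun t => Stilde n A (upd w k t)) (w k)
       (E_miss n A p (fun X => G_miss n p w X k)))
  /\
  (forall (X w : nat -> R),
     (forall i, (i < n)%nat -> X i = -1 \/ X i = 0 \/ X i = 1) ->
     in_simplex lam (2 * n - 1) w ->
     forall k, (k < 2 * n - 1)%nat ->
       Rabs (G_miss n p w X k)
         <= / (1 - rmaxn n p) ^ 2 * exp (lam / (1 - rmaxn n p))).
Proof.
intros Hn _ _ Hlam Hp. split.
- intros w k Hk. apply deriv_part; auto.
- intros X w HX Hw k Hk.
  assert (Hm := rmaxn_bnd n p Hp).
  set (q := 1 - rmaxn n p) in *.
  assert (Hq : 0 < q <= 1) by (unfold q; lra).
  assert (Hpq : forall j, (j < n)%nat -> q <= 1 - p j)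
    by (intros j Hj; unfold q; pose proof (rmaxn_ge n p j Hj); lra).
  assert (Hs := vsum_bound n w lam ltac:(lia) Hw).
  assert (Hfin : / q ^ 2 * exp (rsum (n-1) (fun j => Rabs (vcoef n w j)) / q) <= / q ^ 2 * exp (lam / q)).
  { apply Rmult_le_compat_l. left; apply Rinv_0_lt_compat, pow_lt; lra.
    apply exp_mono. unfold Rdiv. apply Rmult_le_compat_r; [left; apply Rinv_0_lt_compat; lra| auto]. }
  unfold G_miss.
  destruct (Nat.ltb_spec k (n-1)).
  + eapply Rle_trans; [apply (g_bound n p w X _ q); [lia|lia|auto|auto|auto|auto] | auto].
  + destruct (Nat.ltb_spec k (2 * n - 2)).
    * rewrite Rabs_Ropp. eapply Rle_trans; [apply (g_bound n p w X _ q); [lia|lia|auto|auto|auto|auto] | auto].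
    * rewrite Rabs_R0. apply Rmult_le_pos; [left; apply Rinv_0_lt_compat, pow_lt; lra | left; apply exp_pos].
Qed.
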